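(* Let $n\ge 3$ be an integer and let $\{D_I\}_{I\in\binom{[n]}{n-1}}$ be a family of positive real numbers, where $[n]=\{1,\dots,n\}$; write $D_{\hat i}=D_{[n]\setminus\{i\}}$ for $i\in[n]$. There exists a positive-weighted (simple, finite) graph $\mathcal G=(G,w)$ with vertex set exactly $V(G)=[n]$ such that $D_{\hat i}(\mathcal G)=D_{\hat i}$ for all $i\in[n]$ if and only if the following two conditions hold: (i) $(n-2)D_{\hat i}\le \sum_{j\in[n]\setminus\{i\}} D_{\hat j}$ for every $i\in[n]$; (ii) if the maximum of $\{D_{\hat i}\}_{i\in[n]}$ is attained by at least two indices $i$, then all the inequalities in (i) are strict.
   Context: All graphs are simple and finite. A positive-weighted graph $\mathcal G=(G,w)$ is a graph $G$ with a function $w:E(G)\to\mathbb R_{>0}$; for a subgraph $G'$, $w(G')$ is the sum of the weights of the edges of $G'$. For distinct vertices $i_1,\dots,i_k$ of $G$, $D_{\{i_1,\dots,i_k\}}(\mathcal G)$ is the minimum of $w(R)$ over all connected subgraphs $R$ of $G$ whose vertex set contains $i_1,\dots,i_k$ (equality $D_{\hat i}(\mathcal G)=D_{\hat i}$ in particular requires such subgraphs to exist). We write $D_{\hat i}(\mathcal G)=D_{[n]\setminus\{i\}}(\mathcal G)$. *)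

(* Defs.v *)
From mathcomp Require Import all_boot all_order all_algebra.
From mathcomp Require Import reals.
Set Implicit Arguments. Unset Strict Implicit. Unset Printing Implicit Defensive.
Import Order.TTheory GRing.Theory Num.Theory.
Local Open Scope ring_scope.

(* A simple finite graph on the vertex type 'I_n: its edge set E is a set of
   unordered pairs {x,y} with x <> y (2-element subsets of 'I_n). *)
Definition simple_edges (n : nat) (E : {set {set 'I_n}}) : Prop :=
  forall e, e \in E -> #|e| = 2%N.

Definition pos_weighted (R : realType) (n : nat)
  (E : {set {set 'I_n}}) (w : {set 'I_n} -> R) : Prop :=
  simple_edges E /\ forall e, e \in E -> 0 < w e.

Definition subgraph_of (n : nat) (E : {set {set 'I_n}})
  (S : {set 'I_n}) (F : {set {set 'I_n}}) : Prop :=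
  F \subset E /\ forall e, e \in F -> e \subset S.

Definition sub_connected (n : nat) (S : {set 'I_n}) (F : {set {set 'I_n}})
  : Prop :=
  S != set0 /\
  forall x y, x \in S -> y \in S ->
    connect (fun a b : 'I_n => [set a; b] \in F) x y.

Definition wsum (R : realType) (n : nat) (w : {set 'I_n} -> R)
  (F : {set {set 'I_n}}) : R := \sum_(e in F) w e.

(* D_X(G) = d : the minimum of w(R) over all connected subgraphs R of G whose
   vertex set contains X exists and equals d. *)
Definition D_eq (R : realType) (n : nat) (E : {set {set 'I_n}})
  (w : {set 'I_n} -> R) (X : {set 'I_n}) (d : R) : Prop :=
  (exists S F, subgraph_of E S F /\ sub_connected S F /\ X \subset S
               /\ wsum w F = d) /\
  (forall S F, subgraph_of E S F -> sub_connected S F -> X \subset S ->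
               d <= wsum w F).

(* Main.v *)
Require Import Defs.
From mathcomp Require Import all_boot all_order all_algebra.
From mathcomp Require Import reals.
From mathcomp Require Import zify ring lra.
Import Order.TTheory GRing.Theory Num.Theory.
Local Open Scope ring_scope.
Set Implicit Arguments. Unset Strict Implicit. Unset Printing Implicit Defensive.

Lemma exists_argmax (R : realType) (T : finType) (P : pred T) (f : T -> R) i0 :
  P i0 -> exists j, P j /\ forall k, P k -> f k <= f j.
Proof. move=> Pi0. case: (arg_maxP f Pi0) => j Pj Hj. by exists j; split => // k /Hj. Qed.

Definition erel n (F : {set {set 'I_n}}) : rel 'I_n := fun a b => [set a; b] \in F.

Lemma erel_sym n (F : {set {set 'I_n}}) : symmetric (erel F).
Proof. by move=> a b; rewrite /erel setUC. Qed.

Fixpoint reach n (F : {set {set 'I_n}}) (r : 'I_n) (m : nat) : {set 'I_n} :=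
  if m is m'.+1 then reach F r m' :|: [set v | [exists u in reach F r m', [set u; v] \in F]]
  else [set r].

Lemma reach_path n (F : {set {set 'I_n}}) r p :
  path (erel F) r p -> last r p \in reach F r (size p).
Proof.
elim/last_ind: p => [|p v IH]; first by rewrite /= set11.
rewrite rcons_path last_rcons size_rcons => /andP[hp he] /=.
rewrite inE; apply/orP; right; rewrite inE; apply/existsP; exists (last r p).
by rewrite IH.
Qed.

Lemma reach_connect n (F : {set {set 'I_n}}) r m v :
  v \in reach F r m -> connect (erel F) r v.
Proof.
elim: m v => [|m IH] v /=; first by rewrite inE => /eqP ->.
rewrite inE => /orP[/IH //|]; rewrite inE => /existsP[u /andP[hu he]].
apply: connect_trans (IH _ hu) (connect1 _); exact he.
Qed.

Lemma reach_ex n (F : {set {set 'I_n}}) r j :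
  exists m, (j \in reach F r m) || ~~ connect (erel F) r j.
Proof.
case hc: (connect (erel F) r j); last by exists 0%N; rewrite orbT.
case/connectP: hc => p hp ->; exists (size p); by rewrite reach_path.
Qed.

Definition dist n (F : {set {set 'I_n}}) r j := ex_minn (reach_ex F r j).

Lemma dist_spec n (F : {set {set 'I_n}}) r j : connect (erel F) r j ->
  j \in reach F r (dist F r j) /\ forall m, j \in reach F r m -> (dist F r j <= m)%N.
Proof.
move=> hc; rewrite /dist; case: ex_minnP => m; rewrite hc orbF => hm hmin.
by split=> // k hk; apply: hmin; rewrite hk.
Qed.

Lemma parent_ex n (F : {set {set 'I_n}}) r j : connect (erel F) r j -> j != r ->
  exists u, ([set u; j] \in F) && (dist F r u < dist F r j)%N.
Proof.
move=> hc hjr; case: (dist_spec hc) => hin hmin.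
move: hin; case hd: (dist F r j) => [|m] /=; first by rewrite inE (negbTE hjr).
rewrite inE => /orP[hm|]; first by have := hmin _ hm; rewrite hd ltnn.
rewrite inE => /existsP[u /andP[hu he]]; exists u; rewrite he /=.
have hcu := reach_connect hu.
by have := (dist_spec hcu).2 _ hu.
Qed.

Lemma parent_lemma n (F : {set {set 'I_n}}) S r :
  sub_connected S F -> r \in S ->
  exists f : 'I_n -> {set 'I_n},
    (forall j, j \in S -> j != r -> exists k, k != j /\ f j = [set k; j] /\ f j \in F) /\
    {in [pred j | (j \in S) && (j != r)] &, injective f}.
Proof.
move=> [_ hcon] hr.
pose f j := if [pick u | ([set u; j] \in F) && (dist F r u < dist F r j)%N] is Some u
            then [set u; j] else set0.
have hf : forall j, j \in S -> j != r -> exists u, [/\ f j = [set u; j], [set u; j] \in F &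
                                   (dist F r u < dist F r j)%N].
  move=> j hj hjr; rewrite /f; case: pickP => [u /andP[h1 h2]|hn].
    by exists u.
  case: (parent_ex (hcon _ _ hr hj) hjr) => u hu; by have := hn u; rewrite hu.
exists f; split.
  move=> j hj hjr; case: (hf j hj hjr) => u [e1 e2 e3]; exists u; split.
    by apply/eqP => E; move: e3; rewrite E ltnn.
  by rewrite e1.
move=> j1 j2; rewrite !inE => /andP[h1 h1r] /andP[h2 h2r].
case: (hf _ h1 h1r) => u1 [e1 _ d1]; case: (hf _ h2 h2r) => u2 [e2 _ d2].
rewrite e1 e2 => E; apply/eqP; apply/negPn/negP => hne.
have : j1 \in [set u2; j2] by rewrite -E !inE eqxx orbT.
rewrite !inE (negbTE hne) orbF => /eqP Eu2.
have : j2 \in [set u1; j1] by rewrite E !inE eqxx orbT.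
rewrite !inE (eq_sym j2 j1) (negbTE hne) orbF => /eqP Eu1.
move: d1 d2; rewrite -Eu1 -Eu2 => d1 d2.
by move: (ltn_trans d1 d2); rewrite ltnn.
Qed.


Lemma sum_inj_le (R : realType) n (F : {set {set 'I_n}}) (w : {set 'I_n} -> R)
  (P : {pred 'I_n}) (f : 'I_n -> {set 'I_n}) :
  (forall e, e \in F -> 0 <= w e) -> (forall j, j \in P -> f j \in F) ->
  {in P &, injective f} ->
  \sum_(j in P) w (f j) <= \sum_(e in F) w e.
Proof.
move=> hw hPF hinj; rewrite -(big_imset _ hinj) [X in _ <= X](big_setID (f @: P)) /=.
have -> : F :&: f @: P = f @: P.
  apply/setIidPr; apply/subsetP => e /imsetP[j hj ->]; exact: hPF.
rewrite lerDl; apply: sumr_ge0 => e; rewrite inE => /andP[_ he]; exact: hw.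
Qed.

Lemma conn_via n (F : {set {set 'I_n}}) k :
  (forall x, connect (erel F) x k) -> forall x y, connect (erel F) x y.
Proof.
move=> h x y; apply: connect_trans (h x) _.
by rewrite (sym_connect_sym (@erel_sym n F)).
Qed.

Lemma spanning_iff n (E F : {set {set 'I_n}}) (x0 : 'I_n) :
  (subgraph_of E setT F /\ sub_connected setT F) <->
  ((F \subset E) && [forall x, forall y, connect (erel F) x y]).
Proof.
split.
  move=> [[hs _] [_ hc]]; rewrite hs /=; apply/forallP => x; apply/forallP => y.
  by apply: hc; rewrite in_setT.
move=> /andP[hs /forallP hc]; split; first by split => // e _; apply: subsetT.
split; first by apply/set0Pn; exists x0; rewrite in_setT.
by move=> x y _ _; move: (hc x) => /forallP /(_ y).
Qed.


Lemma connect_mono n (F F' : {set {set 'I_n}}) x y : F \subset F' ->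
  connect (erel F) x y -> connect (erel F') x y.
Proof.
move=> hs; apply: connect_sub => a b h; apply: connect1; exact: (subsetP hs _ h).
Qed.

Lemma min_spanning (R : realType) n (hn : (3 <= n)%N) (E : {set {set 'I_n}})
  (w : {set 'I_n} -> R) (D : 'I_n -> R) (hD : forall i, D_eq E w [set~ i] (D i)) :
  exists T, [/\ subgraph_of E setT T, sub_connected setT T &
   forall T', subgraph_of E setT T' -> sub_connected setT T' -> wsum w T <= wsum w T'].
Proof.
have h0 : (0 < n)%N by apply: leq_trans hn.
have h1 : (1 < n)%N by apply: leq_trans hn.
have h2 : (2 < n)%N by [].
pose v0 := Ordinal h0; pose v1 := Ordinal h1; pose v2 := Ordinal h2.
case: (hD v0) => [[S0 [F0 [[hs0 he0] [[_ hc0] [hx0 _]]]]] _].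
case: (hD v1) => [[S1 [F1 [[hs1 he1] [[_ hc1] [hx1 _]]]]] _].
pose P := fun F : {set {set 'I_n}} => (F \subset E) && [forall x, forall y, connect (erel F) x y].
have hP : P (F0 :|: F1).
  rewrite /P subUset hs0 hs1 /=; apply/forallP => x; apply/forallP => y.
  apply: (conn_via (k := v2)) => {y} x.
  have hv2 : forall S : {set 'I_n}, forall v : 'I_n, [set~ v] \subset S -> v != v2 -> v2 \in S.
    by move=> S v hS hv; apply: (subsetP hS); rewrite in_setC1 eq_sym.
  case: (eqVneq x v0) => [->|hx].
    apply: (connect_mono (F := F1)); first exact: subsetUr.
    apply: hc1; first by apply: (subsetP hx1); rewrite in_setC1.
    by apply: (hv2 _ v1).
  apply: (connect_mono (F := F0)); first exact: subsetUl.
  apply: hc0; first by apply: (subsetP hx0); rewrite in_setC1.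
  by apply: (hv2 _ v0).
case: (exists_argmax (fun F => - wsum w F) hP) => T [PT hT].
case/(spanning_iff _ _ v0): PT => hs hc.
exists T; split => // T' h1' h2'.
have : P T' by apply/(spanning_iff _ _ v0).
by move/hT; rewrite lerN2.
Qed.


Lemma sum_const_C1 (R : realType) n (t : R) (i : 'I_n) :
  \sum_(j | j != i) t = (n-1)%:R * t.
Proof. by rewrite sumr_const cardC1 card_ord mulr_natl subn1. Qed.

Lemma key_bound (R : realType) n (E : {set {set 'I_n}}) (w : {set 'I_n} -> R)
  (D : 'I_n -> R) (hpw : pos_weighted E w) (hD : forall i, D_eq E w [set~ i] (D i))
  T (hsT : subgraph_of E setT T)
  (hmin : forall T', subgraph_of E setT T' -> sub_connected setT T' -> wsum w T <= wsum w T')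
  j k : k != j -> [set k; j] \in T -> wsum w T - D j <= w [set k; j].
Proof.
move=> hkj he.
have heE : [set k; j] \in E := subsetP hsT.1 _ he.
have hwe : 0 < w [set k; j] := hpw.2 _ heE.
case: (hD j) => [[S [F [[hsF heF] [hcF [hxS hwF]]]]] _].
case hjS: (j \in S).
  have hST : S = setT.
    apply/setP => x; rewrite in_setT; case: (eqVneq x j) => [->//|hx].
    by apply: (subsetP hxS); rewrite in_setC1.
  subst S; have := hmin F (conj hsF heF) hcF; rewrite hwF; lra.
have hnF : [set k; j] \notin F.
  apply/negP => h; move: (heF _ h) => /subsetP /(_ j).
  by rewrite !inE eqxx orbT hjS => /(_ isT).
have hkS : k \in S by apply: (subsetP hxS); rewrite in_setC1.
have hs' : subgraph_of E setT ([set k; j] |: F).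
  split; first by rewrite subUset sub1set heE hsF.
  by move=> e _; apply: subsetT.
have hc' : sub_connected setT ([set k; j] |: F).
  split; first by apply/set0Pn; exists j; rewrite in_setT.
  move=> x y _ _; apply: (conn_via (k := k)) => {y} x.
  case: (eqVneq x j) => [->|hx].
    by apply: connect1; rewrite /erel setUC in_setU1 eqxx.
  apply: (connect_mono (F := F)); first exact: subsetUr.
  by apply: hcF.2 => //; apply: (subsetP hxS); rewrite in_setC1.
have := hmin _ hs' hc'; rewrite /wsum big_setU1 //= -/(wsum w F) hwF; lra.
Qed.

Lemma necessity (R : realType) (n : nat) (hn : (3 <= n)%N)
  (D : 'I_n -> R) (E : {set {set 'I_n}}) (w : {set 'I_n} -> R)
  (hpw : pos_weighted E w) (hD : forall i, D_eq E w [set~ i] (D i)) :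
  ((forall i, (n - 2)%:R * D i <= \sum_(j | j != i) D j) /\
   ((exists i j : 'I_n, i != j /\ D j = D i /\ forall k, D k <= D i) ->
    forall i, (n - 2)%:R * D i < \sum_(j | j != i) D j)).
Proof.
case: (min_spanning hn hD) => T [hsT hcT hmin].
set t := wsum w T.
have hDt : forall i, D i <= t by move=> i; apply: ((hD i).2 setT T hsT hcT); apply: subsetT.
have hf : forall i, exists f : 'I_n -> {set 'I_n},
   [/\ forall j, j != i -> t - D j <= w (f j), forall j, j != i -> 0 < w (f j) &
       \sum_(j | j != i) w (f j) <= t].
  move=> i; have hi : i \in [set: 'I_n] by rewrite in_setT.
  case: (parent_lemma hcT hi) => f [hf1 hf2]; exists f; split.
  - move=> j hj; case: (hf1 j (in_setT j) hj) => k [hkj [-> hk]].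
    exact: (key_bound hpw hD hsT hmin hkj).
  - move=> j hj; case: (hf1 j (in_setT j) hj) => k [hkj [-> hk]].
    by apply: hpw.2; apply: (subsetP hsT.1).
  have := sum_inj_le (w := w) (F := T) _ _ hf2.
  have -> : \sum_(j in [pred j | (j \in [set: 'I_n]) && (j != i)]) w (f j) =
            \sum_(j | j != i) w (f j) by apply: eq_bigl => j; rewrite inE in_setT.
  apply.
    by move=> e he; apply/ltW/hpw.2; apply: (subsetP hsT.1).
  move=> j; rewrite inE => /andP[_ hj]; case: (hf1 j (in_setT j) hj) => k [_ [_ ->]] //.
have hN : (n - 1)%:R = (n - 2)%:R + 1 :> R.
  have -> : (n - 1 = (n - 2).+1)%N by lia.
  by rewrite -addn1 natrD.
have hNpos : 0 < (n - 2)%:R :> R by rewrite ltr0n; lia.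
have hsplit : forall i, \sum_(j | j != i) D j = (n-1)%:R * t - \sum_(j | j != i) (t - D j).
  by move=> i; rewrite sumrB sum_const_C1 opprB addrCA subrr addr0.
have hbase : forall i, (n - 2)%:R * t <= \sum_(j | j != i) D j.
  move=> i; case: (hf i) => f [h1 _ h3].
  have : \sum_(j | j != i) (t - D j) <= t.
    apply: le_trans h3; apply: ler_sum => j hj; exact: h1.
  rewrite hsplit hN; lra.
split.
  move=> i; apply: le_trans (hbase i); apply: ler_wpM2l; [exact: ltW | exact: hDt].
move=> [p [q [hpq [hqp hmax]]]] i.
case: (ltP (D i) t) => hit.
  apply: lt_le_trans (hbase i); by rewrite ltr_pM2l.
pose r := if p != i then p else q.
have hri : r != i.
  rewrite /r; case: ifP => // /negbFE /eqP <-; by rewrite eq_sym.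
have hDr : D r = D p by rewrite /r; case: ifP.
case: (hf i) => f [h1 h2 h3].
have : \sum_(j | j != i) (t - D j) < t.
  rewrite (bigD1 r) //=.
  have h4 : \sum_(j | (j != i) && (j != r)) (t - D j) <= \sum_(j | (j != i) && (j != r)) w (f j).
    by apply: ler_sum => j /andP[hj _]; exact: h1.
  have h5 : \sum_(j | j != i) w (f j) = w (f r) + \sum_(j | (j != i) && (j != r)) w (f j).
    by rewrite (bigD1 r).
  have h6 := h2 r hri.
  have h7 : t - D r <= 0 by rewrite hDr; have := hmax i; lra.
  lra.
have h8 : (n - 2)%:R * D i <= (n - 2)%:R * t by apply: ler_wpM2l; [exact: ltW | exact: hDt].
rewrite hsplit hN; lra.
Qed.


Lemma sum_pair (R : realType) n (x : 'I_n -> R) k j : k != j ->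
  \sum_(v in [set k; j]) x v = x k + x j.
Proof.
by move=> hkj; rewrite big_setU1 ?big_set1 // inE.
Qed.

Lemma LB (R : realType) n (x : 'I_n -> R) (S : {set 'I_n}) (F : {set {set 'I_n}}) (r : 'I_n) (mu : R) :
  (forall e, e \in F -> e \subset S) -> sub_connected S F -> r \in S ->
  (forall v, v \in S -> mu <= x v) -> (forall v, 0 <= x v) ->
  \sum_(j in S :\ r) (x j + mu) <= \sum_(e in F) \sum_(v in e) x v.
Proof.
move=> hFS hc hr hmu hx.
case: (parent_lemma hc hr) => f [hf1 hf2].
have -> : \sum_(j in S :\ r) (x j + mu) =
          \sum_(j in [pred j | (j \in S) && (j != r)]) (x j + mu).
  by apply: eq_bigl => j; rewrite in_setD1 inE andbC.
apply: le_trans (sum_inj_le (w := fun e => \sum_(v in e) x v) _ _ hf2).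
- apply: ler_sum => j; rewrite inE => /andP[hj hjr].
  case: (hf1 j hj hjr) => k [hkj [-> hk]]; rewrite sum_pair // [X in _ <= X]addrC lerD2l.
  apply: hmu; apply: (subsetP (hFS _ hk)); by rewrite !inE eqxx.
- by move=> e _; apply: sumr_ge0.
- move=> j; rewrite inE => /andP[hj hjr].
  by case: (hf1 j hj hjr) => k [_ [_ ->]].
Qed.

Definition star n (c : 'I_n) (S : {set 'I_n}) : {set {set 'I_n}} :=
  [set [set c; j] | j in S :\ c].

Lemma star_ok (R : realType) n (x : 'I_n -> R) (c : 'I_n) (S : {set 'I_n}) : c \in S ->
  [/\ subgraph_of [set e : {set 'I_n} | #|e| == 2] S (star c S),
      sub_connected S (star c S) &
      wsum (fun e => \sum_(v in e) x v) (star c S) = \sum_(j in S :\ c) (x c + x j)].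
Proof.
move=> hc; split.
- split.
    apply/subsetP => e /imsetP[j hj ->]; rewrite inE cards2.
    by move: hj; rewrite in_setD1 => /andP[hjc _]; rewrite (eq_sym c j) hjc.
  move=> e /imsetP[j hj ->]; apply/subsetP => v; rewrite !inE => /orP[/eqP ->//|/eqP ->].
  by move: hj; rewrite in_setD1 => /andP[].
- split; first by apply/set0Pn; exists c.
  have hv : forall v, v \in S -> connect (erel (star c S)) v c.
    move=> v hvS; case: (eqVneq v c) => [->|hvc]; first exact: connect0.
    apply: connect1; rewrite /erel setUC; apply/imsetP; exists v => //.
    by rewrite in_setD1 hvc hvS.
  move=> x0 y0 hx0 hy0; apply: connect_trans (hv _ hx0) _.
  by rewrite (sym_connect_sym (@erel_sym n _)); apply: hv.
- rewrite /wsum big_imset /=.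
    apply: eq_bigr => j; rewrite in_setD1 => /andP[hjc _]; rewrite sum_pair //; by rewrite eq_sym.
  move=> j1 j2; rewrite !in_setD1 => /andP[h1 _] /andP[h2 _] E.
  have : j1 \in [set c; j2] by rewrite -E !inE eqxx orbT.
  by rewrite !inE (negbTE h1) => /eqP.
Qed.


Lemma sufficiency (R : realType) (n : nat) (hn : (3 <= n)%N)
  (D : 'I_n -> R) (hD : forall i, 0 < D i) :
  (forall i, (n - 2)%:R * D i <= \sum_(j | j != i) D j) ->
  ((exists i j : 'I_n, i != j /\ D j = D i /\ forall k, D k <= D i) ->
    forall i, (n - 2)%:R * D i < \sum_(j | j != i) D j) ->
  exists (E : {set {set 'I_n}}) (w : {set 'I_n} -> R),
      pos_weighted E w /\ forall i, D_eq E w [set~ i] (D i).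
Proof.
move=> hi hii.
have h0 : (0 < n)%N by apply: leq_trans hn.
have h1 : (1 < n)%N by apply: leq_trans hn.
pose v0 := Ordinal h0; pose v1 := Ordinal h1.
have [m [_ hm]] := exists_argmax D (i0 := v0) (P := predT) isT.
have hm' : forall k, D k <= D m by move=> k; apply: hm.
have [i0 hi0] : exists i0 : 'I_n, i0 != m.
  case: (eqVneq v0 m) => [e|ne]; last by exists v0.
  by exists v1; rewrite -e; apply/eqP => /(congr1 val).
have [m2 [hm2m hm2]] := exists_argmax D (P := fun j => j != m) hi0.
set N : R := (n - 2)%:R.
have hNpos : 0 < N by rewrite ltr0n; lia.
have hN1 : 1 <= N by rewrite /N ler1n; lia.
have hN : (n - 1)%:R = N + 1 :> R.
  have -> : (n - 1 = (n - 2).+1)%N by lia.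
  by rewrite -addn1 natrD.
set Sp := \sum_(j | j != m) D j.
set t := Sp / N.
have hNt : N * t = Sp by rewrite /t mulrC divfK // gt_eqF.
set M := D m; set a2 := D m2.
have ha2M : a2 <= M by apply: hm'.
have hMt : M <= t.
  by rewrite -(ler_pM2l hNpos) hNt; apply: hi.
set y := (N * t - (N - 1) * a2 - M) / (2 * N).
have hy : 2 * N * y = N * t - (N - 1) * a2 - M.
  by rewrite /y mulrC divfK // mulf_neq0 // ?gt_eqF //; lra.
have hy0 : 0 <= y.
  rewrite /y divr_ge0 //; last by lra.
  have : 0 <= N * (t - M) by apply: mulr_ge0; lra.
  have : 0 <= (N - 1) * (M - a2) by apply: mulr_ge0; lra.
  lra.
have hy2 : 2 * y <= t - a2.
  rewrite -(ler_pM2l hNpos).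
  have : N * (2 * y) = 2 * N * y by ring.
  move=> ->; rewrite hy; lra.
pose x j := if j == m then y else t - y - D j.
have hxm : x m = y by rewrite /x eqxx.
have hxj : forall j, j != m -> x j = t - y - D j by move=> j hj; rewrite /x (negbTE hj).
have hxm2pos : 0 < x m2.
  rewrite hxj // -/a2; case: (ltP a2 t) => ht; first lra.
  have hmm2 : m != m2 by rewrite eq_sym.
  have hMa : M = a2 by lra.
  have := hii (ex_intro _ m (ex_intro _ m2 (conj hmm2 (conj (esym hMa) hm')))) m.
  rewrite -/M -/Sp -hNt => h.
  have hMt2 : M = t by lra.
  by move: h; rewrite hMt2 ltxx.
have hx2 : forall j, j != m -> x m2 <= x j.
  move=> j hj; rewrite !hxj //; have := hm2 j hj; lra.
have hxy : forall v, y <= x v.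
  move=> v; case: (eqVneq v m) => [->|hv]; first by rewrite hxm.
  apply: le_trans (hx2 v hv); rewrite hxj // -/a2; lra.
have hx0 : forall v, 0 <= x v by move=> v; apply: le_trans (hxy v).
have hSx : \sum_(j | j != m) x j = t - (N + 1) * y.
  rewrite (eq_bigr (fun j => t - y - D j)); last by move=> j hj; rewrite hxj.
  rewrite sumrB sum_const_C1 -/Sp hN -hNt; lra.
have hfull : \sum_(j in [set: 'I_n] :\ m) (x j + y) = t.
  rewrite (eq_bigl (fun j => j != m)); last by move=> j; rewrite in_setD1 in_setT andbT.
  rewrite big_split /= hSx sum_const_C1 hN; lra.
have hDt : forall i, D i <= t by move=> i; apply: le_trans (hm' i) hMt.
pose r i := if i == m then m2 else m.
have hri : forall i, r i != i.
  move=> i; rewrite /r; case: (eqVneq i m) => [->|hne] //. by rewrite eq_sym.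
have hrmu : forall i v, v \in [set~ i] -> x (r i) <= x v.
  move=> i v; rewrite in_setC1 /r; case: (eqVneq i m) => [->|hne] hv; first exact: hx2.
  by rewrite hxm.
have hV : forall i, \sum_(j in [set~ i] :\ r i) (x j + x (r i)) = D i.
  move=> i; rewrite (eq_bigl (fun j => (j != r i) && (j != i))); last first.
    by move=> j; rewrite in_setD1 in_setC1.
  rewrite /r; case: eqVneq => [->|him].
    have h : \sum_(j | j != m) (x j + x m2) = (x m2 + x m2) + \sum_(j | (j != m) && (j != m2)) (x j + x m2).
      by rewrite (bigD1 m2).
    move: h; rewrite big_split /= hSx sum_const_C1 hN => h.
    have -> : \sum_(j | (j != m2) && (j != m)) (x j + x m2) =
              \sum_(j | (j != m) && (j != m2)) (x j + x m2).
      by apply: eq_bigl => j; rewrite andbC.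
    have e2 : x m2 = t - y - a2 by rewrite hxj.
    rewrite e2 in h *; rewrite -/M; lra.
  have h : \sum_(j | j != m) (x j + y) = (x i + y) + \sum_(j | (j != m) && (j != i)) (x j + y).
    by rewrite (bigD1 i).
  move: h; rewrite big_split /= hSx sum_const_C1 hN hxm => h.
  rewrite (hxj _ him) in h; lra.
exists [set e : {set 'I_n} | #|e| == 2], (fun e : {set 'I_n} => \sum_(v in e) x v); split.
  split; first by move=> e; rewrite inE => /eqP.
  move=> e; rewrite inE => /eqP he.
  have : (0 < #|e :\ m|)%N.
    move: (cardsD1 m e); rewrite he; case: (m \in e) => /=; [rewrite add1n => -[<-] | rewrite add0n => <-]; done.
  case/card_gt0P => b; rewrite in_setD1 => /andP[hbm hbe].
  rewrite (bigD1 b) //=; apply: (@lt_le_trans _ _ (x b)).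
    exact: lt_le_trans hxm2pos (hx2 _ hbm).
  by rewrite lerDl; apply: sumr_ge0 => v _; exact: hx0.
move=> i; have hriS : r i \in [set~ i] by rewrite in_setC1.
case: (star_ok x hriS) => hsub hcon hw; split.
  exists [set~ i], (star (r i) [set~ i]); split => //; split => //; split => //.
  rewrite hw -(hV i); apply: eq_bigr => j _; exact: addrC.
move=> S F [hSE hSF] hcSF hXS.
case hiS: (i \in S).
  have hST : S = setT.
    apply/setP => v; rewrite in_setT; case: (eqVneq v i) => [->//|hv].
    by apply: (subsetP hXS); rewrite in_setC1.
  subst S.
  have hLB : t <= wsum (fun e : {set 'I_n} => \sum_(v in e) x v) F.
    rewrite -hfull; apply: LB => //; first exact: in_setT.
  exact: le_trans (hDt i) hLB.
have hSi : S = [set~ i].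
  apply/setP => v; rewrite in_setC1; case: (eqVneq v i) => [->|hv]; first by rewrite hiS.
  by apply: (subsetP hXS); rewrite in_setC1.
subst S; rewrite -(hV i); apply: LB => //; by move=> v hv; apply: hrmu.
Qed.

Unset Implicit Arguments.

Theorem theorem4p1 (R : realType) (n : nat) (hn : (3 <= n)%N)
  (D : 'I_n -> R) (hD : forall i, 0 < D i) :
  (exists (E : {set {set 'I_n}}) (w : {set 'I_n} -> R),
      pos_weighted E w /\ forall i, D_eq E w [set~ i] (D i))
  <->
  ((forall i, (n - 2)%:R * D i <= \sum_(j | j != i) D j) /\
   ((exists i j : 'I_n, i != j /\ D j = D i /\ forall k, D k <= D i) ->
    forall i, (n - 2)%:R * D i < \sum_(j | j != i) D j)).
Proof.
split.
  move=> [E [w [hpw hD']]]; exact: (necessity hn hpw hD').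
move=> [hi hii]; exact: (sufficiency hn hD hi hii).
Qed.
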